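(* Let $a>b>0$ and let $E$ be the ellipse $\frac{x^2}{a^2}+\frac{y^2}{b^2}=1$. Over the family of 3-periodic billiard orbits $T=P_1P_2P_3$ in $E$, the following three quantities are constant (independent of the orbit): (i) the sum $\cos\theta_1+\cos\theta_2+\cos\theta_3$ of the cosines of the interior angles $\theta_i$ of $T$; (ii) the product $|\cos\theta_1'\cos\theta_2'\cos\theta_3'|$ of the cosines of the interior angles $\theta_i'$ of the excentral triangle $T'$ of $T$; (iii) the ratio $A'/A$ of the area $A'$ of the excentral triangle $T'$ to the area $A$ of $T$.
   Context: A 3-periodic billiard orbit in the ellipse $E$ is a nondegenerate triangle $P_1P_2P_3$ with all vertices on $E$ such that at each vertex $P_i$ the normal line to $E$ at $P_i$ bisects the interior angle of the triangle at $P_i$. These orbits form a one-parameter family. The excentral triangle of a triangle is the triangle whose vertices are its three excenters (the intersections of pairs of exterior angle bisectors). *)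

(* Defs.v *)
From Stdlib Require Import Reals.
Open Scope R_scope.

Definition pt := (R * R)%type.

Definition vsub (P Q : pt) : pt := (fst P - fst Q, snd P - snd Q).
Definition vadd (P Q : pt) : pt := (fst P + fst Q, snd P + snd Q).
Definition vscale (k : R) (P : pt) : pt := (k * fst P, k * snd P).
Definition dot (u v : pt) : R := fst u * fst v + snd u * snd v.
Definition cross (u v : pt) : R := fst u * snd v - snd u * fst v.
Definition vnorm (u : pt) : R := sqrt (dot u u).
Definition unitv (u : pt) : pt := vscale (/ vnorm u) u.

Definition on_ellipse (a b : R) (P : pt) : Prop :=
  (fst P)^2 / a^2 + (snd P)^2 / b^2 = 1.
Definition ellipse_normal (a b : R) (P : pt) : pt :=
  (fst P / a^2, snd P / b^2).

Definition nondegenerate (P1 P2 P3 : pt) : Prop :=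
  cross (vsub P2 P1) (vsub P3 P1) <> 0.

Definition cos_angle (A B C : pt) : R :=
  dot (vsub B A) (vsub C A) / (vnorm (vsub B A) * vnorm (vsub C A)).

Definition int_bisector_dir (A B C : pt) : pt :=
  vadd (unitv (vsub B A)) (unitv (vsub C A)).
Definition ext_bisector_dir (A B C : pt) : pt :=
  vsub (unitv (vsub B A)) (unitv (vsub C A)).

Definition on_line (P d X : pt) : Prop := cross (vsub X P) d = 0.

Definition normal_bisects (a b : R) (A B C : pt) : Prop :=
  cross (ellipse_normal a b A) (int_bisector_dir A B C) = 0.

Definition billiard3 (a b : R) (P1 P2 P3 : pt) : Prop :=
  nondegenerate P1 P2 P3 /\
  on_ellipse a b P1 /\ on_ellipse a b P2 /\ on_ellipse a b P3 /\
  normal_bisects a b P1 P2 P3 /\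
  normal_bisects a b P2 P3 P1 /\
  normal_bisects a b P3 P1 P2.

Definition excentral (P1 P2 P3 J1 J2 J3 : pt) : Prop :=
  on_line P2 (ext_bisector_dir P2 P3 P1) J1 /\
  on_line P3 (ext_bisector_dir P3 P1 P2) J1 /\
  on_line P3 (ext_bisector_dir P3 P1 P2) J2 /\
  on_line P1 (ext_bisector_dir P1 P2 P3) J2 /\
  on_line P1 (ext_bisector_dir P1 P2 P3) J3 /\
  on_line P2 (ext_bisector_dir P2 P3 P1) J3.

Definition tri_area (P1 P2 P3 : pt) : R :=
  Rabs (cross (vsub P2 P1) (vsub P3 P1)) / 2.

(* Main.v *)
Require Import Defs.
From Stdlib Require Import Reals Lra Lia Psatz.
Open Scope R_scope.

Definition lin (a b : R) (u v : pt) : pt := (a * fst u + b * fst v, a * snd u + b * snd v).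

Lemma dot_lin a b c d u v : dot (lin a b u v) (lin c d u v) =
  a*c*dot u u + (a*d+b*c)*dot u v + b*d*dot v v.
Proof. destruct u, v; unfold dot, lin; simpl; ring. Qed.
Lemma cross_lin a b c d u v : cross (lin a b u v) (lin c d u v) = (a*d - b*c) * cross u v.
Proof. destruct u, v; unfold cross, lin; simpl; ring. Qed.
Lemma lin_vsub a b c d u v : vsub (lin a b u v) (lin c d u v) = lin (a-c) (b-d) u v.
Proof. destruct u, v; unfold vsub, lin; simpl; f_equal; ring. Qed.
Lemma lin_vadd a b c d u v : vadd (lin a b u v) (lin c d u v) = lin (a+c) (b+d) u v.
Proof. destruct u, v; unfold vadd, lin; simpl; f_equal; ring. Qed.
Lemma lin_vscale k a b u v : vscale k (lin a b u v) = lin (k*a) (k*b) u v.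
Proof. destruct u, v; unfold vscale, lin; simpl; f_equal; ring. Qed.
Lemma unitv_lin a b u v : unitv (lin a b u v) =
  lin (/ vnorm (lin a b u v) * a) (/ vnorm (lin a b u v) * b) u v.
Proof. unfold unitv. apply lin_vscale. Qed.
Lemma vsub_sub_lin (P1 J : pt) a b u v : J = vadd P1 (lin a b u v) ->
  forall Q c d, Q = vadd P1 (lin c d u v) -> vsub J Q = lin (a-c) (b-d) u v.
Proof. intros -> Q c d ->. destruct P1, u, v; unfold vsub, vadd, lin; simpl; f_equal; ring. Qed.
Lemma dot_nonneg w : 0 <= dot w w.
Proof. destruct w; unfold dot; simpl; nra. Qed.
Lemma lagrange w z : dot w w * dot z z = (dot w z)^2 + (cross w z)^2.
Proof. destruct w, z; unfold dot, cross; simpl; ring. Qed.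
Lemma vnorm_sq w : vnorm w * vnorm w = dot w w.
Proof. unfold vnorm. apply sqrt_sqrt, dot_nonneg. Qed.
Lemma vnorm_nonneg w : 0 <= vnorm w.
Proof. apply sqrt_pos. Qed.
Lemma dot_pos_of_cross w z : cross w z <> 0 -> 0 < dot w w.
Proof.
  intro h. pose proof (lagrange w z). pose proof (dot_nonneg w). pose proof (dot_nonneg z).
  assert (0 < cross w z * cross w z) by (apply Rsqr_pos_lt; auto).
  destruct (Req_dec (dot w w) 0) as [e|e]; [|lra]. rewrite e in H. nra.
Qed.
Lemma vnorm_pos_of_cross w z : cross w z <> 0 -> 0 < vnorm w.
Proof. intro h. unfold vnorm. apply sqrt_lt_R0. eapply dot_pos_of_cross; eauto. Qed.
Lemma cross_anti w z : cross z w = - cross w z.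
Proof. destruct w, z; unfold cross; simpl; ring. Qed.

Lemma inter_unique (K K0 A B d e : pt) : cross d e <> 0 ->
  cross (vsub K A) d = 0 -> cross (vsub K B) e = 0 ->
  cross (vsub K0 A) d = 0 -> cross (vsub K0 B) e = 0 -> K = K0.
Proof.
  destruct K as [k1 k2], K0 as [l1 l2], A as [a1 a2], B as [b1 b2], d as [d1 d2], e as [e1 e2].
  unfold cross, vsub; simpl. intros h H1 H2 H3 H4.
  assert (E1 : (k1 - l1) * (d1*e2 - d2*e1) = d1*(((k1-b1)*e2-(k2-b2)*e1) - ((l1-b1)*e2-(l2-b2)*e1)) - e1*(((k1-a1)*d2-(k2-a2)*d1) - ((l1-a1)*d2-(l2-a2)*d1))) by ring.
  assert (E2 : (k2 - l2) * (d1*e2 - d2*e1) = d2*(((k1-b1)*e2-(k2-b2)*e1) - ((l1-b1)*e2-(l2-b2)*e1)) - e2*(((k1-a1)*d2-(k2-a2)*d1) - ((l1-a1)*d2-(l2-a2)*d1))) by ring.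
  rewrite H1, H2, H3, H4 in E1, E2. replace (d1 * (0 - 0) - e1 * (0 - 0)) with 0 in E1 by ring; replace (d2 * (0 - 0) - e2 * (0 - 0)) with 0 in E2 by ring.
  apply Rmult_integral in E1; apply Rmult_integral in E2.
  destruct E1 as [E1|E1]; [|contradiction]; destruct E2 as [E2|E2]; [|contradiction].
  f_equal; lra.
Qed.

Lemma cos_angle_sq A B C : dot (vsub B A) (vsub B A) <> 0 -> dot (vsub C A) (vsub C A) <> 0 ->
  (cos_angle A B C)^2 = (dot (vsub B A) (vsub C A))^2 /
     (dot (vsub B A) (vsub B A) * dot (vsub C A) (vsub C A)).
Proof.
  intros h1 h2. unfold cos_angle.
  rewrite <- (vnorm_sq (vsub B A)), <- (vnorm_sq (vsub C A)).
  assert (vnorm (vsub B A) <> 0) by (intro e; apply h1; rewrite <- vnorm_sq, e; ring).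
  assert (vnorm (vsub C A) <> 0) by (intro e; apply h2; rewrite <- vnorm_sq, e; ring).
  field; auto.
Qed.
Lemma vnorm_sym P Q : vnorm (vsub P Q) = vnorm (vsub Q P).
Proof. destruct P, Q; unfold vnorm, dot, vsub; simpl. f_equal. ring. Qed.

Lemma lin_coef a b c d u v : a = c -> b = d -> lin a b u v = lin c d u v.
Proof. intros -> ->; reflexivity. Qed.


Lemma cos_sq_lin u v a b c d (A B C : pt) W : vsub B A = lin a b u v -> vsub C A = lin c d u v ->
  a*d - b*c <> 0 -> cross u v <> 0 ->
  (dot (lin a b u v) (lin c d u v))^2 = W * (dot (lin a b u v) (lin a b u v) * dot (lin c d u v) (lin c d u v)) ->
  (cos_angle A B C)^2 = W.
Proof.
  intros e1 e2 hd hc heq.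
  assert (hcr : cross (lin a b u v) (lin c d u v) <> 0) by
    (rewrite cross_lin; apply Rmult_integral_contrapositive; split; auto).
  pose proof (dot_pos_of_cross _ _ hcr) as p1.
  assert (hcr' : cross (lin c d u v) (lin a b u v) <> 0) by (rewrite cross_anti; lra).
  pose proof (dot_pos_of_cross _ _ hcr') as p2.
  rewrite cos_angle_sq; try rewrite e1; try rewrite e2; try lra.
  rewrite heq. field. split; lra.
Qed.

Lemma partA (P1 P2 P3 J1 J2 J3 : pt) (L1 L2 L3 : R) :
  L1 = vnorm (vsub P3 P2) -> L2 = vnorm (vsub P3 P1) -> L3 = vnorm (vsub P2 P1) ->
  nondegenerate P1 P2 P3 -> excentral P1 P2 P3 J1 J2 J3 ->
  let rho := (-L1+L2+L3)*(L1-L2+L3)*(L1+L2-L3)/(2*L1*L2*L3) in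
  0 < rho /\
  cos_angle P1 P2 P3 + cos_angle P2 P3 P1 + cos_angle P3 P1 P2 = 1 + rho /\
  Rabs (cos_angle J1 J2 J3 * cos_angle J2 J3 J1 * cos_angle J3 J1 J2) = rho / 4 /\
  tri_area J1 J2 J3 / tri_area P1 P2 P3 = 2 / rho.
Proof.
  intros HL1 HL2 HL3 hnd hex rho.
  unfold nondegenerate in hnd.
  remember (vsub P2 P1) as u eqn:Hu. remember (vsub P3 P1) as v eqn:Hv.
  assert (E32 : vsub P3 P2 = lin (-1) 1 u v) by
    (subst u v; destruct P1, P2, P3; unfold vsub, lin; simpl; f_equal; ring).
  assert (E12 : vsub P1 P2 = lin (-1) 0 u v) by
    (subst u v; destruct P1, P2, P3; unfold vsub, lin; simpl; f_equal; ring).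
  assert (E13 : vsub P1 P3 = lin 0 (-1) u v) by
    (subst u v; destruct P1, P2, P3; unfold vsub, lin; simpl; f_equal; ring).
  assert (E23 : vsub P2 P3 = lin 1 (-1) u v) by
    (subst u v; destruct P1, P2, P3; unfold vsub, lin; simpl; f_equal; ring).
  assert (Eu : u = lin 1 0 u v) by (destruct u, v; unfold lin; simpl; f_equal; ring).
  assert (Ev : v = lin 0 1 u v) by (destruct u, v; unfold lin; simpl; f_equal; ring).
  assert (FP1 : P1 = vadd P1 (lin 0 0 u v)) by
    (destruct P1, u, v; unfold vadd, lin; simpl; f_equal; ring).
  assert (FP2 : P2 = vadd P1 (lin 1 0 u v)) by
    (subst u v; destruct P1, P2, P3; unfold vadd, vsub, lin; simpl; f_equal; ring).
  assert (FP3 : P3 = vadd P1 (lin 0 1 u v)) by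
    (subst u v; destruct P1, P2, P3; unfold vadd, vsub, lin; simpl; f_equal; ring).
  assert (N12 : vnorm (vsub P1 P2) = L3) by (rewrite vnorm_sym; subst; auto).
  assert (N13 : vnorm (vsub P1 P3) = L2) by (rewrite vnorm_sym; subst; auto).
  assert (N23 : vnorm (vsub P2 P3) = L1) by (rewrite vnorm_sym; subst; auto).
  assert (N32 : vnorm (vsub P3 P2) = L1) by auto.
  assert (N21 : vnorm u = L3) by (subst; auto).
  assert (N31 : vnorm v = L2) by (subst; auto).
  rewrite E12 in N12. rewrite E13 in N13. rewrite E23 in N23. rewrite E32 in N32.
  set (cr := cross u v) in *.
  assert (hL3 : 0 < L3) by (rewrite <- N21; apply (vnorm_pos_of_cross u v); auto).
  assert (hL2 : 0 < L2) by (rewrite <- N31; apply (vnorm_pos_of_cross v u); rewrite cross_anti; fold cr; lra).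
  assert (hL1 : 0 < L1).
  { rewrite <- N32; apply (vnorm_pos_of_cross _ (lin (-1) 0 u v)). rewrite cross_lin. fold cr.
    replace ((-1) * 0 - 1 * -1) with 1 by ring. lra. }
  assert (duu : dot u u = L3*L3) by (rewrite <- N21, vnorm_sq; auto).
  assert (dvv : dot v v = L2*L2) by (rewrite <- N31, vnorm_sq; auto).
  assert (duv : dot u v = (L2*L2+L3*L3-L1*L1)/2).
  { rewrite <- N32, vnorm_sq, dot_lin, duu, dvv. field. }
  assert (Her : 4 * (cr*cr) = (-L1+L2+L3)*(L1-L2+L3)*(L1+L2-L3)*(L1+L2+L3)).
  { pose proof (lagrange u v) as HL. rewrite duu, dvv, duv in HL. fold cr in HL.
    replace (cr*cr) with (cr^2) by ring.
    replace (cr^2) with (L3 * L3 * (L2 * L2) - ((L2 * L2 + L3 * L3 - L1 * L1) / 2) ^ 2) by lra.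
    field. }
  assert (hcr2 : 0 < cr*cr) by (apply Rsqr_pos_lt; auto).
  assert (hs1 : 0 < -L1+L2+L3 /\ 0 < L1-L2+L3 /\ 0 < L1+L2-L3).
  { assert (Hp : 0 < (-L1+L2+L3)*(L1-L2+L3)*(L1+L2-L3)*(L1+L2+L3)) by lra.
    destruct (Rle_or_lt (-L1+L2+L3) 0) as [h1|h1].
    { exfalso. assert (0 < (L1-L2+L3)*(L1+L2-L3)*(L1+L2+L3)) by
        (apply Rmult_lt_0_compat; [apply Rmult_lt_0_compat|]; lra).
      replace ((-L1+L2+L3)*(L1-L2+L3)*(L1+L2-L3)*(L1+L2+L3)) with
        ((-L1+L2+L3)*((L1-L2+L3)*(L1+L2-L3)*(L1+L2+L3))) in Hp by ring. nra. }
    destruct (Rle_or_lt (L1-L2+L3) 0) as [h2|h2].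
    { exfalso. assert (0 < (-L1+L2+L3)*(L1+L2-L3)*(L1+L2+L3)) by
        (apply Rmult_lt_0_compat; [apply Rmult_lt_0_compat|]; lra).
      replace ((-L1+L2+L3)*(L1-L2+L3)*(L1+L2-L3)*(L1+L2+L3)) with
        ((L1-L2+L3)*((-L1+L2+L3)*(L1+L2-L3)*(L1+L2+L3))) in Hp by ring. nra. }
    destruct (Rle_or_lt (L1+L2-L3) 0) as [h3|h3].
    { exfalso. assert (0 < (-L1+L2+L3)*(L1-L2+L3)*(L1+L2+L3)) by
        (apply Rmult_lt_0_compat; [apply Rmult_lt_0_compat|]; lra).
      replace ((-L1+L2+L3)*(L1-L2+L3)*(L1+L2-L3)*(L1+L2+L3)) with
        ((L1+L2-L3)*((-L1+L2+L3)*(L1-L2+L3)*(L1+L2+L3))) in Hp by ring. nra. }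
    repeat split; assumption. }
  destruct hs1 as [hs1 [hs2 hs3]].
  set (s1 := -L1+L2+L3) in *. set (s2 := L1-L2+L3) in *. set (s3 := L1+L2-L3) in *.
  assert (hrho : 0 < rho).
  { unfold rho. apply Rdiv_lt_0_compat; [|repeat apply Rmult_lt_0_compat; lra]. apply Rmult_lt_0_compat; [|lra].
    apply Rmult_lt_0_compat; lra. }
  split; [exact hrho|].
  split.
  { unfold cos_angle. rewrite <- Hu, <- Hv, E32, E12, E13, E23, N21, N31, N32, N12, N13, N23.
    rewrite !dot_lin, duu, dvv, duv. unfold rho, s1, s2, s3. field. lra. }
  assert (Uu : unitv u = lin (/L3) 0 u v) by
    (unfold unitv; rewrite N21; destruct u, v; unfold vscale, lin; simpl; f_equal; ring).
  assert (Uv : unitv v = lin 0 (/L2) u v) by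
    (unfold unitv; rewrite N31; destruct u, v; unfold vscale, lin; simpl; f_equal; ring).
  assert (Ed1 : ext_bisector_dir P1 P2 P3 = lin (/L3) (-/L2) u v).
  { unfold ext_bisector_dir. rewrite <- Hu, <- Hv, Uu, Uv, lin_vsub. apply lin_coef; ring. }
  assert (Ed2 : ext_bisector_dir P2 P3 P1 = lin (/L1*(-1) - /L3*(-1)) (/L1*1 - /L3*0) u v).
  { unfold ext_bisector_dir. rewrite E32, E12, !unitv_lin, N32, N12, lin_vsub. reflexivity. }
  assert (Ed3 : ext_bisector_dir P3 P1 P2 = lin (/L2*0 - /L1*1) (/L2*(-1) - /L1*(-1)) u v).
  { unfold ext_bisector_dir. rewrite E13, E23, !unitv_lin, N13, N23, lin_vsub. reflexivity. }
  destruct hex as [h1a [h1b [h2a [h2b [h3a h3b]]]]]. unfold on_line in *.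
  rewrite Ed1 in h2b, h3a. rewrite Ed2 in h1a, h3b. rewrite Ed3 in h1b, h2a.
  assert (hL1' : L1 <> 0) by lra. assert (hL2' : L2 <> 0) by lra. assert (hL3' : L3 <> 0) by lra.
  assert (hs1' : s1 <> 0) by lra. assert (hs2' : s2 <> 0) by lra. assert (hs3' : s3 <> 0) by lra.
  assert (EJ1 : J1 = vadd P1 (lin (L2/s1) (L3/s1) u v)).
  { eapply inter_unique; [| exact h1a | exact h1b | |].
    - rewrite cross_lin. apply Rmult_integral_contrapositive; split; auto.
      replace (_ - _) with (s1/(L1*L2*L3)) by (unfold s1; field; auto).
      apply Rgt_not_eq, Rdiv_lt_0_compat; [lra| repeat apply Rmult_lt_0_compat; lra].
    - rewrite (vsub_sub_lin _ _ _ _ _ _ eq_refl P2 1 0 FP2), cross_lin.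
      replace (_ - _) with 0 by (unfold s1; field; auto). ring.
    - rewrite (vsub_sub_lin _ _ _ _ _ _ eq_refl P3 0 1 FP3), cross_lin.
      replace (_ - _) with 0 by (unfold s1; field; auto). ring. }
  assert (EJ2 : J2 = vadd P1 (lin (-L2/s2) (L3/s2) u v)).
  { eapply inter_unique; [| exact h2a | exact h2b | |].
    - rewrite cross_lin. apply Rmult_integral_contrapositive; split; auto.
      replace (_ - _) with (s2/(L1*L2*L3)) by (unfold s2; field; auto).
      apply Rgt_not_eq, Rdiv_lt_0_compat; [lra| repeat apply Rmult_lt_0_compat; lra].
    - rewrite (vsub_sub_lin _ _ _ _ _ _ eq_refl P3 0 1 FP3), cross_lin.
      replace (_ - _) with 0 by (unfold s2; field; auto). ring.
    - rewrite (vsub_sub_lin _ _ _ _ _ _ eq_refl P1 0 0 FP1), cross_lin.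
      replace (_ - _) with 0 by (unfold s2; field; auto). ring. }
  assert (EJ3 : J3 = vadd P1 (lin (L2/s3) (-L3/s3) u v)).
  { eapply inter_unique; [| exact h3a | exact h3b | |].
    - rewrite cross_lin. apply Rmult_integral_contrapositive; split; auto.
      replace (_ - _) with (s3/(L1*L2*L3)) by (unfold s3; field; auto).
      apply Rgt_not_eq, Rdiv_lt_0_compat; [lra| repeat apply Rmult_lt_0_compat; lra].
    - rewrite (vsub_sub_lin _ _ _ _ _ _ eq_refl P1 0 0 FP1), cross_lin.
      replace (_ - _) with 0 by (unfold s3; field; auto). ring.
    - rewrite (vsub_sub_lin _ _ _ _ _ _ eq_refl P2 1 0 FP2), cross_lin.
      replace (_ - _) with 0 by (unfold s3; field; auto). ring. }
  set (a1 := L2/s1) in *. set (b1 := L3/s1) in *. set (a2 := -L2/s2) in *. set (b2 := L3/s2) in *.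
  set (a3 := L2/s3) in *. set (b3 := -L3/s3) in *.
  assert (V21 : vsub J2 J1 = lin (a2-a1) (b2-b1) u v) by (apply (vsub_sub_lin P1); auto).
  assert (V31 : vsub J3 J1 = lin (a3-a1) (b3-b1) u v) by (apply (vsub_sub_lin P1); auto).
  assert (V32 : vsub J3 J2 = lin (a3-a2) (b3-b2) u v) by (apply (vsub_sub_lin P1); auto).
  assert (V12 : vsub J1 J2 = lin (a1-a2) (b1-b2) u v) by (apply (vsub_sub_lin P1); auto).
  assert (V13 : vsub J1 J3 = lin (a1-a3) (b1-b3) u v) by (apply (vsub_sub_lin P1); auto).
  assert (V23 : vsub J2 J3 = lin (a2-a3) (b2-b3) u v) by (apply (vsub_sub_lin P1); auto).
  set (D := 4*L1*L2*L3/(s1*s2*s3)).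
  assert (hD : 0 < D) by (unfold D; apply Rdiv_lt_0_compat; repeat apply Rmult_lt_0_compat; lra).
  assert (D1 : (a2-a1)*(b3-b1) - (b2-b1)*(a3-a1) = D) by
    (unfold D, a1, a2, a3, b1, b2, b3, s1, s2, s3; field; repeat split; auto).
  assert (D2 : (a3-a2)*(b1-b2) - (b3-b2)*(a1-a2) = D) by
    (unfold D, a1, a2, a3, b1, b2, b3, s1, s2, s3; field; repeat split; auto).
  assert (D3 : (a1-a3)*(b2-b3) - (b1-b3)*(a2-a3) = D) by
    (unfold D, a1, a2, a3, b1, b2, b3, s1, s2, s3; field; repeat split; auto).
  assert (C1 : (cos_angle J1 J2 J3)^2 = s2*s3/(4*L2*L3)).
  { apply (cos_sq_lin u v _ _ _ _ _ _ _ _ V21 V31); [lra|auto|].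
    rewrite !dot_lin, duu, dvv, duv.
    unfold a1, a2, a3, b1, b2, b3, s1, s2, s3; field; repeat split; auto. }
  assert (C2 : (cos_angle J2 J3 J1)^2 = s1*s3/(4*L1*L3)).
  { apply (cos_sq_lin u v _ _ _ _ _ _ _ _ V32 V12); [lra|auto|].
    rewrite !dot_lin, duu, dvv, duv.
    unfold a1, a2, a3, b1, b2, b3, s1, s2, s3; field; repeat split; auto. }
  assert (C3 : (cos_angle J3 J1 J2)^2 = s1*s2/(4*L1*L2)).
  { apply (cos_sq_lin u v _ _ _ _ _ _ _ _ V13 V23); [lra|auto|].
    rewrite !dot_lin, duu, dvv, duv.
    unfold a1, a2, a3, b1, b2, b3, s1, s2, s3; field; repeat split; auto. }
  split.
  { set (x := cos_angle J1 J2 J3 * cos_angle J2 J3 J1 * cos_angle J3 J1 J2).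
    assert (hx : x^2 = (rho/4)^2).
    { unfold x. rewrite !Rpow_mult_distr, C1, C2, C3. unfold rho. fold s1 s2 s3. field. auto. }
    pose proof (Rabs_pos x). rewrite <- (pow2_abs x) in hx. nra. }
  { unfold tri_area. rewrite V21, V31, cross_lin, D1, <- Hu, <- Hv. fold cr.
    rewrite Rabs_mult, (Rabs_pos_eq D) by lra.
    assert (Rabs cr <> 0) by (apply Rabs_no_R0; auto).
    unfold D, rho. fold s1 s2 s3. field. repeat split; auto. }
Qed.

Lemma pairE (a b kk X1 Y1 X2 Y2 L : R) :
  X1*X1+Y1*Y1 = 1 -> X2*X2+Y2*Y2 = 1 ->
  L*L = a*a*((X2-X1)*(X2-X1)) + b*b*((Y2-Y1)*(Y2-Y1)) ->
  (X1-X2)*(X1-X2)+(Y1-Y2)*(Y1-Y2) = kk*L ->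
  (X1-X2)*(X1-X2)+(Y1-Y2)*(Y1-Y2) <> 0 ->
  (1 - kk*kk*(a*a-b*b)/4)*X1*X2 + (1 + kk*kk*(a*a-b*b)/4)*Y1*Y2 = 1 - kk*kk*(a*a+b*b)/4.
Proof.
  intros U1 U2 HL Hq hq.
  set (q := (X1-X2)*(X1-X2)+(Y1-Y2)*(Y1-Y2)) in *.
  set (E := (1 - kk*kk*(a*a-b*b)/4)*X1*X2 + (1 + kk*kk*(a*a-b*b)/4)*Y1*Y2).
  set (h := 1 - kk*kk*(a*a+b*b)/4).
  assert (HG : q*q - kk*kk*(a*a*((X2-X1)*(X2-X1)) + b*b*((Y2-Y1)*(Y2-Y1))) - 2*q*(h-E)
     = ((1)*X1*X1 + (-2)*X1*X2 + (2)*X2*X2 + (1)*Y1*Y1 + (-2)*Y1*Y2 + (2)*Y2*Y2 + (-1/2)*kk*kk*b*b + (1/2)*kk*kk*a*a + (-1) + (-1/2)*X1*X2*kk*kk*a*a + (1/2)*X1*X2*kk*kk*b*b + (1/2)*Y1*Y2*kk*kk*a*a + (-1/2)*Y1*Y2*kk*kk*b*b + (-1)*Y2*Y2*kk*kk*a*a + (1)*Y2*Y2*kk*kk*b*b)*(X1*X1+Y1*Y1-1) + ((-2)*X1*X2 + (1)*X2*X2 + (-2)*Y1*Y2 + (1)*Y2*Y2 + (1/2)*kk*kk*b*b + (-1/2)*kk*kk*a*a + (-1/2)*X1*X2*kk*kk*a*a + (1/2)*X1*X2*kk*kk*b*b + (1/2)*Y1*Y2*kk*kk*a*a + (-1/2)*Y1*Y2*kk*kk*b*b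 + (1) + (1)*X1*X1*kk*kk*a*a + (-1)*X1*X1*kk*kk*b*b)*(X2*X2+Y2*Y2-1)) by (unfold q, h, E; field).
  rewrite U1, U2, <- HL in HG.
  replace (q*q) with (kk*kk*(L*L)) in HG by (rewrite Hq; ring).
  assert (2*q*(h-E) = 0) by (rewrite Rminus_diag in HG; lra).
  assert (h - E = 0).
  { destruct (Rmult_integral _ _ H) as [H'|H']; auto. exfalso.
    destruct (Rmult_integral _ _ H'); lra. }
  lra.
Qed.

Lemma idF (e h Z W : R) : Z + W = 1 ->
  (1-e)*(4*h*h*((1-e)*(1-e)*Z) - (4*((1-e)*(1-e)*Z + (1+e)*(1+e)*W) - 4*h*h)*((1+e)*(1+e)*W))
  + (1+e)*(4*h*h*((1+e)*(1+e)*W) - (4*((1-e)*(1-e)*Z + (1+e)*(1+e)*W) - 4*h*h)*((1-e)*(1-e)*Z))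
  - 4*h*((1-e)*(1-e)*Z + (1+e)*(1+e)*W)*((1-e)*(1-e)*Z + (1+e)*(1+e)*W)
  = 4*(2*h+1-e*e)*((1-e)*(1-e)*Z + (1+e)*(1+e)*W)*(h - ((1-e)*Z+(1+e)*W)).
Proof. intros H. replace W with (1-Z) by lra. ring. Qed.

Lemma idP (e Z W : R) : Z + W = 1 ->
  4*((((1-e)*(1-e)*Z + (1+e)*(1+e)*W) + (-(1-e*e)/2)*((1-e)*Z+(1+e)*W))^2
     - (((1-e)*(1-e)*Z + (1+e)*(1+e)*W) - (-(1-e*e)/2)*(-(1-e*e)/2))*(4*e*e*Z*W))
  = ((1-e)*(1-e)*Z + (1+e)*(1+e)*W)^3.
Proof. intros H. replace W with (1-Z) by lra. field. Qed.

Lemma cancel_l (N x y : R) : N <> 0 -> N * x = N * y -> x = y.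
Proof. intros h e. apply (Rmult_eq_reg_l N); auto. Qed.

Lemma core (e h X1 Y1 X2 Y2 X3 Y3 : R) :
  X1*X1+Y1*Y1 = 1 -> X2*X2+Y2*Y2 = 1 -> X3*X3+Y3*Y3 = 1 ->
  (1-e)*X1*X2 + (1+e)*Y1*Y2 = h -> (1-e)*X1*X3 + (1+e)*Y1*Y3 = h ->
  (1-e)*X2*X3 + (1+e)*Y2*Y3 = h ->
  (X2-X1)*(Y3-Y1) - (Y2-Y1)*(X3-X1) <> 0 -> 0 <= e -> (e = 1 -> h <> 0) ->
  2*h + 1 - e*e = 0 /\
  (1 + (X1*X2+Y1*Y2))*(1 + (X1*X3+Y1*Y3))*(1+(X2*X3+Y2*Y3)) = h*h/2.
Proof.
  intros U1 U2 U3 E12 E13 E23 hcr he he1.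
  set (nx := (1-e)*X1). set (ny := (1+e)*Y1). set (N := nx*nx+ny*ny).
  set (sx := X2+X3). set (sy := Y2+Y3). set (wx := X2-X3). set (wy := Y2-Y3).
  assert (Hnw : nx*wx + ny*wy = 0).
  { replace (nx*wx+ny*wy) with (((1-e)*X1*X2 + (1+e)*Y1*Y2) - ((1-e)*X1*X3 + (1+e)*Y1*Y3))
      by (unfold nx, ny, wx, wy; ring). lra. }
  assert (Hsw : sx*wx + sy*wy = 0).
  { replace (sx*wx+sy*wy) with ((X2*X2+Y2*Y2) - (X3*X3+Y3*Y3)) by (unfold sx, sy, wx, wy; ring). lra. }
  assert (Hns : nx*sx + ny*sy = 2*h).
  { replace (nx*sx+ny*sy) with (((1-e)*X1*X2 + (1+e)*Y1*Y2) + ((1-e)*X1*X3 + (1+e)*Y1*Y3))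
      by (unfold nx, ny, sx, sy; ring). lra. }
  assert (hw : wx <> 0 \/ wy <> 0).
  { destruct (Req_dec wx 0) as [h1|h1]; [|auto]. destruct (Req_dec wy 0) as [h2|h2]; [|auto].
    exfalso. apply hcr. unfold wx, wy in *. replace X3 with X2 by lra. replace Y3 with Y2 by lra. ring. }
  assert (Hcr : nx*sy - ny*sx = 0).
  { assert (c1 : (nx*sy - ny*sx)*wx = sy*(nx*wx+ny*wy) - ny*(sx*wx+sy*wy)) by ring.
    assert (c2 : (nx*sy - ny*sx)*wy = -sx*(nx*wx+ny*wy) + nx*(sx*wx+sy*wy)) by ring.
    rewrite Hnw, Hsw in c1, c2.
    destruct hw as [hw|hw].
    - apply (Rmult_eq_reg_r wx); auto. lra.
    - apply (Rmult_eq_reg_r wy); auto. lra. }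
  assert (hN : N <> 0).
  { intro hN0. assert (hnx : nx = 0) by (unfold N in hN0; nra).
    assert (hny : ny = 0) by (unfold N in hN0; nra).
    rewrite hnx, hny in Hns. assert (h = 0) by lra.
    assert (Y1 = 0) by (unfold ny in hny; destruct (Rmult_integral _ _ hny); lra).
    assert (X1*X1 = 1) by nra.
    assert (e = 1).
    { unfold nx in hnx. destruct (Rmult_integral _ _ hnx); [lra|]. subst X1. lra. }
    apply he1; auto. }
  set (g := nx*wy - ny*wx).
  assert (Nsx : N*sx = 2*h*nx).
  { rewrite <- Hns. replace (N*sx) with ((nx*sx+ny*sy)*nx - (nx*sy-ny*sx)*ny) by (unfold N; ring).
    rewrite Hcr. ring. }
  assert (Nsy : N*sy = 2*h*ny).
  { rewrite <- Hns. replace (N*sy) with ((nx*sx+ny*sy)*ny + (nx*sy-ny*sx)*nx) by (unfold N; ring).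
    rewrite Hcr. ring. }
  assert (Nwx : N*wx = -g*ny).
  { replace (N*wx) with ((nx*wx+ny*wy)*nx - g*ny) by (unfold N, g; ring). rewrite Hnw. ring. }
  assert (Nwy : N*wy = g*nx).
  { replace (N*wy) with ((nx*wx+ny*wy)*ny + g*nx) by (unfold N, g; ring). rewrite Hnw. ring. }
  assert (Hsum : sx*sx+sy*sy+wx*wx+wy*wy = 4).
  { replace (sx*sx+sy*sy+wx*wx+wy*wy) with (2*(X2*X2+Y2*Y2) + 2*(X3*X3+Y3*Y3))
      by (unfold sx, sy, wx, wy; ring). lra. }
  assert (Hg : 4*h*h + g*g = 4*N).
  { apply (cancel_l N); auto.
    transitivity ((N*sx)*(N*sx) + (N*sy)*(N*sy) + (N*wx)*(N*wx) + (N*wy)*(N*wy)).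
    - rewrite Nsx, Nsy, Nwx, Nwy. unfold N. ring.
    - replace ((N*sx)*(N*sx) + (N*sy)*(N*sy) + (N*wx)*(N*wx) + (N*wy)*(N*wy))
        with (N*N*(sx*sx+sy*sy+wx*wx+wy*wy)) by ring. rewrite Hsum. ring. }
  assert (H23 : (1-e)*((N*sx)*(N*sx) - (N*wx)*(N*wx)) + (1+e)*((N*sy)*(N*sy) - (N*wy)*(N*wy)) = 4*h*(N*N)).
  { replace ((1-e)*((N*sx)*(N*sx) - (N*wx)*(N*wx)) + (1+e)*((N*sy)*(N*sy) - (N*wy)*(N*wy)))
      with (4*(N*N)*((1-e)*X2*X3 + (1+e)*Y2*Y3)) by (unfold sx, sy, wx, wy; ring).
    rewrite E23. ring. }
  rewrite Nsx, Nsy, Nwx, Nwy in H23.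
  replace ((1-e)*(2*h*nx*(2*h*nx) - -g*ny*(-g*ny)) + (1+e)*(2*h*ny*(2*h*ny) - g*nx*(g*nx)))
    with ((1-e)*(4*h*h*(nx*nx) - (g*g)*(ny*ny)) + (1+e)*(4*h*h*(ny*ny) - (g*g)*(nx*nx))) in H23 by ring.
  replace (g*g) with (4*N - 4*h*h) in H23 by lra.
  assert (Hnx2 : nx*nx = (1-e)*(1-e)*(X1*X1)) by (unfold nx; ring).
  assert (Hny2 : ny*ny = (1+e)*(1+e)*(Y1*Y1)) by (unfold ny; ring).
  assert (HN : N = (1-e)*(1-e)*(X1*X1) + (1+e)*(1+e)*(Y1*Y1)) by (unfold N; rewrite Hnx2, Hny2; ring).
  set (d1 := nx*X1 + ny*Y1).
  assert (Hd1 : d1 = (1-e)*(X1*X1)+(1+e)*(Y1*Y1)) by (unfold d1, nx, ny; ring).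
  assert (HF : 4*(2*h+1-e*e)*N*(h-d1) = 0).
  { rewrite Hnx2, Hny2, HN in H23. rewrite HN, Hd1.
    rewrite <- (idF e h (X1*X1) (Y1*Y1) U1). lra. }
  assert (hd : h - d1 <> 0).
  { intro hd0. apply hcr.
    assert (a1 : nx*(X2-X1) + ny*(Y2-Y1) = 0).
    { replace (nx*(X2-X1) + ny*(Y2-Y1)) with (((1-e)*X1*X2 + (1+e)*Y1*Y2) - d1) by (unfold d1, nx, ny; ring). lra. }
    assert (a2 : nx*(X3-X1) + ny*(Y3-Y1) = 0).
    { replace (nx*(X3-X1) + ny*(Y3-Y1)) with (((1-e)*X1*X3 + (1+e)*Y1*Y3) - d1) by (unfold d1, nx, ny; ring). lra. }
    set (c := (X2-X1)*(Y3-Y1) - (Y2-Y1)*(X3-X1)).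
    assert (b1 : c*nx = (Y3-Y1)*(nx*(X2-X1) + ny*(Y2-Y1)) - (Y2-Y1)*(nx*(X3-X1) + ny*(Y3-Y1))) by (unfold c; ring).
    assert (b2 : c*ny = -(X3-X1)*(nx*(X2-X1) + ny*(Y2-Y1)) + (X2-X1)*(nx*(X3-X1) + ny*(Y3-Y1))) by (unfold c; ring).
    rewrite a1, a2 in b1, b2.
    assert (c*c*N = 0) by (unfold N; replace (c*c*(nx*nx+ny*ny)) with ((c*nx)*(c*nx) + (c*ny)*(c*ny)) by ring;
      rewrite b1, b2; ring).
    destruct (Rmult_integral _ _ H) as [H'|H']; [|contradiction].
    destruct (Rmult_integral _ _ H'); auto. }
  assert (HH : 2*h+1-e*e = 0).
  { assert (4*N*(h-d1) <> 0) by (repeat apply Rmult_integral_contrapositive; split; try split; auto; lra).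
    apply (Rmult_eq_reg_r (4*N*(h-d1))); auto. rewrite Rmult_0_l. rewrite <- HF. ring. }
  split; [exact HH|].
  assert (P23 : N*(1+(X2*X3+Y2*Y3)) = 2*h*h).
  { apply (cancel_l N); auto.
    replace (N*(N*(1+(X2*X3+Y2*Y3)))) with ((N*sx)*(N*sx)/2 + (N*sy)*(N*sy)/2 + N*N*((1 + (X2*X3+Y2*Y3)) - (sx*sx+sy*sy)/2)) by field.
    replace ((1 + (X2*X3+Y2*Y3)) - (sx*sx+sy*sy)/2) with (1 - (sx*sx+sy*sy+wx*wx+wy*wy)/4) by (unfold sx, sy, wx, wy; field).
    rewrite Hsum, Nsx, Nsy. unfold N. field. }
  set (gg := nx*Y1 - ny*X1).
  assert (P12 : N*(1+(X1*X2+Y1*Y2)) = N + h*d1 + g*gg/2).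
  { replace (N*(1+(X1*X2+Y1*Y2))) with (N + X1*((N*sx)+(N*wx))/2 + Y1*((N*sy)+(N*wy))/2) by (unfold sx, wx, sy, wy; field).
    rewrite Nsx, Nwx, Nsy, Nwy. unfold d1, gg. field. }
  assert (P13 : N*(1+(X1*X3+Y1*Y3)) = N + h*d1 - g*gg/2).
  { replace (N*(1+(X1*X3+Y1*Y3))) with (N + X1*((N*sx)-(N*wx))/2 + Y1*((N*sy)-(N*wy))/2) by (unfold sx, wx, sy, wy; field).
    rewrite Nsx, Nwx, Nsy, Nwy. unfold d1, gg. field. }
  assert (Hgg : gg*gg = 4*e*e*(X1*X1)*(Y1*Y1)) by (unfold gg, nx, ny; field).
  assert (hh : h = -(1-e*e)/2) by lra.
  assert (Hid := idP e (X1*X1) (Y1*Y1) U1).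
  rewrite <- HN, <- Hd1, <- hh in Hid.
  apply (cancel_l (N*N*N)). { repeat apply Rmult_integral_contrapositive; split; auto. }
  replace (N*N*N*((1 + (X1*X2+Y1*Y2))*(1 + (X1*X3+Y1*Y3))*(1+(X2*X3+Y2*Y3))))
    with ((N*(1+(X1*X2+Y1*Y2)))*(N*(1+(X1*X3+Y1*Y3)))*(N*(1+(X2*X3+Y2*Y3)))) by field.
  rewrite P12, P13, P23.
  replace ((N + h*d1 + g*gg/2)*(N + h*d1 - g*gg/2)) with ((N+h*d1)^2 - (g*g)*(gg*gg)/4) by field.
  replace (g*g) with (4*N - 4*h*h) by lra. rewrite Hgg.
  replace (N*N*N*(h*h/2)) with (h*h/2 * N^3) by field. rewrite <- Hid. field.
Qed.

Lemma circle (X1 Y1 X2 Y2 X3 Y3 : R) :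
  X1*X1+Y1*Y1 = 1 -> X2*X2+Y2*Y2 = 1 -> X3*X3+Y3*Y3 = 1 ->
  ((X1-X2)*(X1-X2)+(Y1-Y2)*(Y1-Y2))*((X1-X3)*(X1-X3)+(Y1-Y3)*(Y1-Y3))*((X2-X3)*(X2-X3)+(Y2-Y3)*(Y2-Y3))
  = 4*(((X2-X1)*(Y3-Y1)-(Y2-Y1)*(X3-X1))*((X2-X1)*(Y3-Y1)-(Y2-Y1)*(X3-X1))).
Proof.
  intros U1 U2 U3.
  assert (HG : ((X1-X2)*(X1-X2)+(Y1-Y2)*(Y1-Y2))*((X1-X3)*(X1-X3)+(Y1-Y3)*(Y1-Y3))*((X2-X3)*(X2-X3)+(Y2-Y3)*(Y2-Y3))
  - 4*(((X2-X1)*(Y3-Y1)-(Y2-Y1)*(X3-X1))*((X2-X1)*(Y3-Y1)-(Y2-Y1)*(X3-X1)))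
  = ((1)*X1*X1*X2*X2 + (-2)*X1*X1*X2*X3 + (1)*X1*X1*X3*X3 + (1)*X1*X1*Y2*Y2 + (-2)*X1*X1*Y2*Y3 + (1)*X1*X1*Y3*Y3 + (-2)*X1*X2*X2*X2 + (2)*X1*X2*X2*X3 + (2)*X1*X2*X3*X3 + (-2)*X1*X2*Y2*Y2 + (4)*X1*X2*Y2*Y3 + (-2)*X1*X2*Y3*Y3 + (1)*X2*X2*X2*X2 + (-2)*X2*X2*X2*X3 + (2)*X2*X2*X3*X3 + (2)*X2*X2*Y2*Y2 + (2)*X2*X2*Y2*Y3 + (2)*X2*X2*Y3*Y3 + (-2)*X1*X3*X3*X3 + (-2)*X1*Y2*Y2*X3 + (4)*X1*Y2*X3*Y3 + (-2)*X1*X3*Y3*Y3 + (-2)*X2*X3*X3*X3 + (1)*X3*X3*X3*X3 + (2)*Y2*Y2*X3*X3 + (2)*Y2*X3*X3*Y3 + (2)*X3*X3*Y3*Y3 + (1)*Y1*Y1*X2*X2 + (-2)*Y1*Y1*X2*X3 + (1)*Y1*Y1*X3*X3 + (1)*Y1*Y1*Y2*Y2 + (-2)*Y1*Y1*Y2*Y3 + (1)*Y1*Y1*Y3*Y3 + (-2)*Y1*X2*X2*Y3 + (4)*Y1*X2*X3*Y3 + (-2)*Y1*X3*X3*Y3 + (2)*Y1*Y2*Y2*Y3 + (2)*Y1*Y2*Y3*Y3 + (-2)*Y1*Y3*Y3*Y3 + (-2)*X2*X3*Y3*Y3 + (-6)*Y2*Y2*Y3*Y3 + (2)*Y2*Y3*Y3*Y3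 + (1)*Y3*Y3*Y3*Y3 + (-2)*Y1*X2*X2*Y2 + (4)*Y1*X2*Y2*X3 + (-2)*Y1*Y2*X3*X3 + (-2)*Y1*Y2*Y2*Y2 + (-8)*X2*Y2*X3*Y3 + (2)*Y2*Y2*Y2*Y3 + (-2)*X2*Y2*Y2*X3 + (1)*Y2*Y2*Y2*Y2 + (-3)*X2*X2 + (6)*X2*X3 + (-3)*X3*X3 + (1)*Y2*Y2 + (-2)*Y2*Y3 + (1)*Y3*Y3)*(X1*X1+Y1*Y1-1) + ((8)*X1*X1*Y3*Y3 + (4)*X1*X1*X2*X3 + (2)*X1*X2*X3*X3 + (4)*X1*Y1*X2*Y3 + (-2)*X1*X2*Y3*Y3 + (-2)*X1*X2*X2*X3 + (1)*X2*X2*X3*X3 + (-2)*Y1*X2*X2*Y3 + (1)*X2*X2*Y3*Y3 + (4)*X1*Y1*Y2*X3 + (-8)*X1*Y1*X3*Y3 + (-2)*Y1*Y2*X3*X3 + (2)*Y1*X3*X3*Y3 + (2)*Y1*Y2*Y3*Y3 + (2)*Y1*Y3*Y3*Y3 + (-4)*X1*X1*Y2*Y3 + (-2)*X1*X3*X3*X3 + (-2)*X1*Y2*Y2*X3 + (4)*X1*Y2*X3*Y3 + (-2)*X1*X3*Y3*Y3 + (-2)*X2*X3*X3*X3 + (1)*X3*X3*X3*X3 + (1)*Y2*Y2*X3*X3 + (-2)*Y2*X3*X3*Y3 + (2)*X3*X3*Y3*Y3 + (4)*Y1*X2*X3*Y3 + (-2)*Y1*Y2*Y2*Y3 + (-2)*X2*X3*Y3*Y3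 + (1)*Y2*Y2*Y3*Y3 + (-2)*Y2*Y3*Y3*Y3 + (1)*Y3*Y3*Y3*Y3 + (-1)*X3*X3 + (4)*X1*X3 + (-4)*X1*X1 + (-2)*X1*X2 + (1)*X2*X2 + (-5)*Y3*Y3 + (-2)*Y1*Y2 + (2)*Y2*Y3 + (-2)*X2*X3 + (1)*Y2*Y2 + (2))*(X2*X2+Y2*Y2-1) + ((-8)*X1*X1*X2*X2 + (4)*X1*X1*X2*X3 + (-4)*X1*X1*Y2*Y3 + (-2)*X1*X2*X3*X3 + (-8)*X1*Y1*X2*Y2 + (4)*X1*Y1*X2*Y3 + (4)*X1*X2*X2*X3 + (4)*X1*X2*Y2*Y3 + (-2)*X1*X2*Y3*Y3 + (-4)*Y1*X2*X2*Y3 + (4)*X1*Y1*Y2*X3 + (-2)*Y1*Y2*X3*X3 + (4)*Y1*X2*Y2*X3 + (-2)*Y1*Y2*Y3*Y3 + (2)*X1*X2 + (4)*X1*X1 + (4)*X2*X2 + (-4)*X1*X3 + (2)*X3*X3 + (2)*Y1*Y2 + (-4)*X2*X3 + (2)*Y3*Y3 + (-2))*(X3*X3+Y3*Y3-1)) by field.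
  rewrite U1, U2, U3 in HG. lra.
Qed.

Lemma partB_coord (a b X1 Y1 X2 Y2 X3 Y3 L1 L2 L3 : R) :
  0 < b -> b < a ->
  X1*X1+Y1*Y1 = 1 -> X2*X2+Y2*Y2 = 1 -> X3*X3+Y3*Y3 = 1 ->
  L3*L3 = a*a*((X2-X1)*(X2-X1)) + b*b*((Y2-Y1)*(Y2-Y1)) ->
  L2*L2 = a*a*((X3-X1)*(X3-X1)) + b*b*((Y3-Y1)*(Y3-Y1)) ->
  L1*L1 = a*a*((X3-X2)*(X3-X2)) + b*b*((Y3-Y2)*(Y3-Y2)) ->
  0 < L1 -> 0 < L2 -> 0 < L3 ->
  (X2-X1)*(Y3-Y1) - (Y2-Y1)*(X3-X1) <> 0 ->
  (X1*(X2-X1)+Y1*(Y2-Y1))*L2 = (X1*(X3-X1)+Y1*(Y3-Y1))*L3 ->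
  (X2*(X3-X2)+Y2*(Y3-Y2))*L3 = (X2*(X1-X2)+Y2*(Y1-Y2))*L1 ->
  exists t, 0 < t /\ 2*(1 - t*(a*a+b*b)) + 1 - (t*(a*a-b*b))*(t*(a*a-b*b)) = 0 /\
   ((-L1+L2+L3)*(L1-L2+L3)*(L1+L2-L3)/(2*L1*L2*L3))^2 = (1 - t*(a*a+b*b))^2.
Proof.
  intros hb hab U1 U2 U3 HL3 HL2 HL1 pL1 pL2 pL3 hcr Bi1 Bi2.
  set (q12 := (X1-X2)*(X1-X2)+(Y1-Y2)*(Y1-Y2)).
  set (q13 := (X1-X3)*(X1-X3)+(Y1-Y3)*(Y1-Y3)).
  set (q23 := (X2-X3)*(X2-X3)+(Y2-Y3)*(Y2-Y3)).
  set (cQ := (X2-X1)*(Y3-Y1) - (Y2-Y1)*(X3-X1)) in *.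
  assert (d12 : X1*(X2-X1)+Y1*(Y2-Y1) = -q12/2).
  { replace (X1*(X2-X1)+Y1*(Y2-Y1)) with ((X2*X2+Y2*Y2)/2 - (X1*X1+Y1*Y1)/2 - q12/2) by (unfold q12; field).
    rewrite U1, U2. field. }
  assert (d13 : X1*(X3-X1)+Y1*(Y3-Y1) = -q13/2).
  { replace (X1*(X3-X1)+Y1*(Y3-Y1)) with ((X3*X3+Y3*Y3)/2 - (X1*X1+Y1*Y1)/2 - q13/2) by (unfold q13; field).
    rewrite U1, U3. field. }
  assert (d23 : X2*(X3-X2)+Y2*(Y3-Y2) = -q23/2).
  { replace (X2*(X3-X2)+Y2*(Y3-Y2)) with ((X3*X3+Y3*Y3)/2 - (X2*X2+Y2*Y2)/2 - q23/2) by (unfold q23; field).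
    rewrite U2, U3. field. }
  assert (d21 : X2*(X1-X2)+Y2*(Y1-Y2) = -q12/2).
  { replace (X2*(X1-X2)+Y2*(Y1-Y2)) with ((X1*X1+Y1*Y1)/2 - (X2*X2+Y2*Y2)/2 - q12/2) by (unfold q12; field).
    rewrite U1, U2. field. }
  rewrite d12, d13 in Bi1. rewrite d23, d21 in Bi2.
  assert (hcQ2 : 0 < cQ*cQ) by (apply Rsqr_pos_lt; auto).
  assert (lag1 : q12*q13 = (cQ*cQ) + ((X2-X1)*(X3-X1)+(Y2-Y1)*(Y3-Y1))^2) by (unfold q12, q13, cQ; ring).
  assert (lag2 : q12*q23 = (cQ*cQ) + ((X1-X2)*(X3-X2)+(Y1-Y2)*(Y3-Y2))^2) by (unfold q12, q23, cQ; ring).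
  assert (g1 : cQ*cQ <= q12*q13) by (rewrite lag1; pose proof (pow2_ge_0 ((X2-X1)*(X3-X1)+(Y2-Y1)*(Y3-Y1))); lra).
  assert (g2 : cQ*cQ <= q12*q23) by (rewrite lag2; pose proof (pow2_ge_0 ((X1-X2)*(X3-X2)+(Y1-Y2)*(Y3-Y2))); lra).
  assert (nq12 : 0 <= q12) by (unfold q12; pose proof (Rle_0_sqr (X1-X2)); pose proof (Rle_0_sqr (Y1-Y2)); unfold Rsqr in *; lra).
  assert (nq13 : 0 <= q13) by (unfold q13; pose proof (Rle_0_sqr (X1-X3)); pose proof (Rle_0_sqr (Y1-Y3)); unfold Rsqr in *; lra).
  assert (nq23 : 0 <= q23) by (unfold q23; pose proof (Rle_0_sqr (X2-X3)); pose proof (Rle_0_sqr (Y2-Y3)); unfold Rsqr in *; lra).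
  assert (pq12 : 0 < q12).
  { destruct (Req_dec q12 0) as [e|e]; [|lra]. rewrite e in g1. lra. }
  assert (pq13 : 0 < q13).
  { destruct (Req_dec q13 0) as [e|e]; [|lra]. rewrite e in g1. lra. }
  assert (pq23 : 0 < q23).
  { destruct (Req_dec q23 0) as [e|e]; [|lra]. rewrite e in g2. lra. }
  set (kk := q12/L3).
  assert (pk : 0 < kk) by (unfold kk; apply Rdiv_lt_0_compat; lra).
  assert (K3 : q12 = kk*L3) by (unfold kk; field; lra).
  assert (K2 : q13 = kk*L2).
  { unfold kk. apply (Rmult_eq_reg_r L3); [|lra]. field_simplify; [|lra]. lra. }
  assert (K1 : q23 = kk*L1).
  { unfold kk. apply (Rmult_eq_reg_r L3); [|lra]. field_simplify; [|lra]. lra. }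
  assert (E12 := pairE a b kk X1 Y1 X2 Y2 L3 U1 U2 HL3 K3 ltac:(lra)).
  assert (E13 := pairE a b kk X1 Y1 X3 Y3 L2 U1 U3 HL2 K2 ltac:(lra)).
  assert (E23 := pairE a b kk X2 Y2 X3 Y3 L1 U2 U3 HL1 K1 ltac:(lra)).
  assert (hC : 0 < a*a-b*b) by (replace (a*a-b*b) with ((a-b)*(a+b)) by ring; apply Rmult_lt_0_compat; lra).
  assert (hS : 0 < a*a+b*b) by (apply Rplus_lt_0_compat; apply Rmult_lt_0_compat; lra).
  destruct (core (kk*kk*(a*a-b*b)/4) (1 - kk*kk*(a*a+b*b)/4) X1 Y1 X2 Y2 X3 Y3 U1 U2 U3 E12 E13 E23 hcr)
    as [HH HP].
  { apply Rmult_le_pos; [|lra]. apply Rmult_le_pos; [apply Rmult_le_pos; lra|lra]. }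
  { intros e1 h0. assert (kk*kk*(b*b) = 0) by lra.
    assert (0 < kk*kk*(b*b)) by (apply Rmult_lt_0_compat; apply Rmult_lt_0_compat; lra). lra. }
  exists (kk*kk/4). split; [apply Rdiv_lt_0_compat; [apply Rmult_lt_0_compat|]; lra|]. split.
  { replace (kk*kk/4*(a*a-b*b)) with (kk*kk*(a*a-b*b)/4) by field.
    replace (1 - kk*kk/4*(a*a+b*b)) with (1 - kk*kk*(a*a+b*b)/4) by field. lra. }
  set (h := 1 - kk*kk*(a*a+b*b)/4) in *.
  replace (1 - kk*kk/4*(a*a+b*b)) with h by (unfold h; field).
  assert (eL1 : L1 = q23/kk) by (rewrite K1; field; lra).
  assert (eL2 : L2 = q13/kk) by (rewrite K2; field; lra).
  assert (eL3 : L3 = q12/kk) by (rewrite K3; field; lra).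
  rewrite eL1, eL2, eL3.
  replace ((- (q23 / kk) + q13 / kk + q12 / kk) * (q23 / kk - q13 / kk + q12 / kk) * (q23 / kk + q13 / kk - q12 / kk) /
      (2 * (q23 / kk) * (q13 / kk) * (q12 / kk)))
    with ((- q23 + q13 + q12) * (q23 - q13 + q12) * (q23 + q13 - q12) / (2 * q23 * q13 * q12)) by (field; repeat split; lra).
  assert (p12 : 1 + (X1*X2+Y1*Y2) = 2 - q12/2).
  { replace (1 + (X1*X2+Y1*Y2)) with (1 + (X1*X1+Y1*Y1)/2 + (X2*X2+Y2*Y2)/2 - q12/2) by (unfold q12; field). rewrite U1, U2. field. }
  assert (p13 : 1 + (X1*X3+Y1*Y3) = 2 - q13/2).
  { replace (1 + (X1*X3+Y1*Y3)) with (1 + (X1*X1+Y1*Y1)/2 + (X3*X3+Y3*Y3)/2 - q13/2) by (unfold q13; field). rewrite U1, U3. field. }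
  assert (p23 : 1 + (X2*X3+Y2*Y3) = 2 - q23/2).
  { replace (1 + (X2*X3+Y2*Y3)) with (1 + (X2*X2+Y2*Y2)/2 + (X3*X3+Y3*Y3)/2 - q23/2) by (unfold q23; field). rewrite U2, U3. field. }
  rewrite p12, p13, p23 in HP.
  assert (Hc := circle X1 Y1 X2 Y2 X3 Y3 U1 U2 U3). fold q12 q13 q23 cQ in Hc.
  assert (s1 : (-q23+q13+q12)^2 = 4*(q12*q13 - cQ*cQ)) by (unfold q12, q13, q23, cQ; ring).
  assert (s2 : (q23-q13+q12)^2 = 4*(q12*q23 - cQ*cQ)) by (unfold q12, q13, q23, cQ; ring).
  assert (s3 : (q23+q13-q12)^2 = 4*(q13*q23 - cQ*cQ)) by (unfold q12, q13, q23, cQ; ring).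
  replace (((- q23 + q13 + q12) * (q23 - q13 + q12) * (q23 + q13 - q12) / (2 * q23 * q13 * q12))^2)
    with ((-q23+q13+q12)^2 * (q23-q13+q12)^2 * (q23+q13-q12)^2 / (4 * (q23 * q13 * q12)^2)) by (field; repeat split; lra).
  rewrite s1, s2, s3.
  replace (cQ*cQ) with (q12*q13*q23/4) by lra.
  apply (Rmult_eq_reg_r (4 * (q23 * q13 * q12)^2)); [|apply Rgt_not_eq; apply Rmult_lt_0_compat; [lra|]; apply pow_lt; repeat apply Rmult_lt_0_compat; lra].
  replace (h^2) with (2*(h*h/2)) by field. rewrite <- HP. field. repeat split; lra.
Qed.

Lemma bis_real (n1 n2 e1 e2 f1 f2 : R) :
  e1*e1+e2*e2 = 1 -> f1*f1+f2*f2 = 1 -> e1*f2 - e2*f1 <> 0 ->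
  n1*(e2+f2) - n2*(e1+f1) = 0 -> n1*e1+n2*e2 = n1*f1+n2*f2.
Proof.
  intros he hf hc hx.
  set (s1 := e1+f1) in *. set (s2 := e2+f2) in *.
  set (d1 := e1-f1). set (d2 := e2-f2).
  assert (sd : s1*d1+s2*d2 = 0) by (unfold s1, s2, d1, d2; lra).
  assert (k1 : (n1*d1+n2*d2)*s1 = n1*(s1*d1+s2*d2) - d2*(n1*s2-n2*s1)) by ring.
  assert (k2 : (n1*d1+n2*d2)*s2 = n2*(s1*d1+s2*d2) + d1*(n1*s2-n2*s1)) by ring.
  rewrite sd, hx in k1, k2.
  assert (hs : s1 <> 0 \/ s2 <> 0).
  { destruct (Req_dec s1 0) as [h1|h1]; [|auto]. destruct (Req_dec s2 0) as [h2|h2]; [|auto].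
    exfalso. apply hc. unfold s1, s2 in *. replace f1 with (-e1) by lra. replace f2 with (-e2) by lra. ring. }
  assert (n1*d1+n2*d2 = 0).
  { destruct hs as [hs|hs].
    - apply (Rmult_eq_reg_r s1); auto. lra.
    - apply (Rmult_eq_reg_r s2); auto. lra. }
  unfold d1, d2 in H. lra.
Qed.

Lemma bis (n w z : pt) : cross w z <> 0 -> cross n (vadd (unitv w) (unitv z)) = 0 ->
  dot n w * vnorm z = dot n z * vnorm w.
Proof.
  intros hc hx.
  pose proof (vnorm_pos_of_cross w z hc) as pw.
  assert (hc' : cross z w <> 0) by (rewrite cross_anti; lra).
  pose proof (vnorm_pos_of_cross z w hc') as pz.
  pose proof (vnorm_sq w) as sw. pose proof (vnorm_sq z) as sz.
  set (lw := vnorm w) in *. set (lz := vnorm z) in *.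
  destruct n as [n1 n2], w as [w1 w2], z as [z1 z2].
  unfold unitv, vadd, vscale, cross, dot in *; simpl in *. fold lw lz in hx.
  assert (H := bis_real n1 n2 (/lw*w1) (/lw*w2) (/lz*z1) (/lz*z2)).
  assert (lw <> 0) by lra. assert (lz <> 0) by lra.
  assert (/ lw * w1 * (/ lw * w1) + / lw * w2 * (/ lw * w2) = 1) by (transitivity ((w1*w1+w2*w2)/(lw*lw)); [field; auto| rewrite <- sw; field; auto]).
  assert (/ lz * z1 * (/ lz * z1) + / lz * z2 * (/ lz * z2) = 1) by (transitivity ((z1*z1+z2*z2)/(lz*lz)); [field; auto| rewrite <- sz; field; auto]).
  assert (/ lw * w1 * (/ lz * z2) - / lw * w2 * (/ lz * z1) <> 0).
  { replace (/ lw * w1 * (/ lz * z2) - / lw * w2 * (/ lz * z1)) with ((w1*z2-w2*z1)/(lw*lz)) by (field; auto).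
    apply Rmult_integral_contrapositive; split; auto. apply Rinv_neq_0_compat. apply Rmult_integral_contrapositive; auto. }
  specialize (H H2 H3 H4 hx).
  apply (Rmult_eq_reg_r (/lw * /lz)).
  - replace ((n1 * w1 + n2 * w2) * lz * (/ lw * / lz)) with (n1 * (/ lw * w1) + n2 * (/ lw * w2)) by (field; auto).
    rewrite H. field; auto.
  - apply Rmult_integral_contrapositive; split; apply Rinv_neq_0_compat; auto.
Qed.

Lemma cross_cyc (P1 P2 P3 : pt) : cross (vsub P3 P2) (vsub P1 P2) = cross (vsub P2 P1) (vsub P3 P1).
Proof. destruct P1, P2, P3; unfold cross, vsub; simpl; ring. Qed.

Lemma partB (a b : R) (hb : 0 < b) (hab : b < a) (P1 P2 P3 : pt) (L1 L2 L3 : R) :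
  L1 = vnorm (vsub P3 P2) -> L2 = vnorm (vsub P3 P1) -> L3 = vnorm (vsub P2 P1) ->
  billiard3 a b P1 P2 P3 ->
  exists t, 0 < t /\ 2*(1 - t*(a*a+b*b)) + 1 - (t*(a*a-b*b))*(t*(a*a-b*b)) = 0 /\
   ((-L1+L2+L3)*(L1-L2+L3)*(L1+L2-L3)/(2*L1*L2*L3))^2 = (1 - t*(a*a+b*b))^2.
Proof.
  intros HL1 HL2 HL3 [hnd [o1 [o2 [o3 [nb1 [nb2 nb3]]]]]].
  unfold normal_bisects, int_bisector_dir in nb1, nb2. unfold nondegenerate in hnd.
  pose proof (bis _ _ _ hnd nb1) as B1.
  assert (hc2 : cross (vsub P3 P2) (vsub P1 P2) <> 0) by (rewrite cross_cyc; auto).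
  pose proof (bis _ _ _ hc2 nb2) as B2.
  rewrite (vnorm_sym P1 P2) in B2. rewrite <- HL1, <- HL2, <- HL3 in *.
  assert (pL3 : 0 < L3) by (rewrite HL3; apply (vnorm_pos_of_cross _ _ hnd)).
  assert (pL2 : 0 < L2) by (rewrite HL2; apply (vnorm_pos_of_cross _ (vsub P2 P1)); rewrite cross_anti; lra).
  assert (pL1 : 0 < L1) by (rewrite HL1; apply (vnorm_pos_of_cross _ _ hc2)).
  assert (sL1 : L1*L1 = dot (vsub P3 P2) (vsub P3 P2)) by (rewrite HL1; apply vnorm_sq).
  assert (sL2 : L2*L2 = dot (vsub P3 P1) (vsub P3 P1)) by (rewrite HL2; apply vnorm_sq).
  assert (sL3 : L3*L3 = dot (vsub P2 P1) (vsub P2 P1)) by (rewrite HL3; apply vnorm_sq).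
  clear HL1 HL2 HL3 nb1 nb2 nb3 hc2.
  assert (ha : 0 < a) by lra.
  destruct P1 as [x1 y1], P2 as [x2 y2], P3 as [x3 y3].
  assert (exists X, x1 = a*X) as [X1 ->] by (exists (x1/a); field; lra).
  assert (exists X, x2 = a*X) as [X2 ->] by (exists (x2/a); field; lra).
  assert (exists X, x3 = a*X) as [X3 ->] by (exists (x3/a); field; lra).
  assert (exists X, y1 = b*X) as [Y1 ->] by (exists (y1/b); field; lra).
  assert (exists X, y2 = b*X) as [Y2 ->] by (exists (y2/b); field; lra).
  assert (exists X, y3 = b*X) as [Y3 ->] by (exists (y3/b); field; lra).
  unfold on_ellipse, ellipse_normal, dot, vsub, cross in *; simpl in *.
  apply (partB_coord a b X1 Y1 X2 Y2 X3 Y3 L1 L2 L3 hb hab).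
  - rewrite <- o1. field. lra.
  - rewrite <- o2. field. lra.
  - rewrite <- o3. field. lra.
  - rewrite sL3. ring.
  - rewrite sL2. ring.
  - rewrite sL1. ring.
  - exact pL1.
  - exact pL2.
  - exact pL3.
  - intro h0. apply hnd.
    replace ((a * X2 - a * X1) * (b * Y3 - b * Y1) - (b * Y2 - b * Y1) * (a * X3 - a * X1))
      with (a*b*((X2-X1)*(Y3-Y1) - (Y2-Y1)*(X3-X1))) by ring. rewrite h0. ring.
  - replace (X1*(X2-X1)+Y1*(Y2-Y1)) with (a * X1 / a ^ 2 * (a * X2 - a * X1) + b * Y1 / b ^ 2 * (b * Y2 - b * Y1)) by (field; lra).
    replace (X1*(X3-X1)+Y1*(Y3-Y1)) with (a * X1 / a ^ 2 * (a * X3 - a * X1) + b * Y1 / b ^ 2 * (b * Y3 - b * Y1)) by (field; lra).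
    exact B1.
  - replace (X2*(X3-X2)+Y2*(Y3-Y2)) with (a * X2 / a ^ 2 * (a * X3 - a * X2) + b * Y2 / b ^ 2 * (b * Y3 - b * Y2)) by (field; lra).
    replace (X2*(X1-X2)+Y2*(Y1-Y2)) with (a * X2 / a ^ 2 * (a * X1 - a * X2) + b * Y2 / b ^ 2 * (b * Y1 - b * Y2)) by (field; lra).
    exact B2.
Qed.

Theorem corollary1 (a b : R) (hb : 0 < b) (hab : b < a) :
  exists c1 c2 c3 : R,
    forall P1 P2 P3 J1 J2 J3 : pt,
      billiard3 a b P1 P2 P3 ->
      excentral P1 P2 P3 J1 J2 J3 ->
      cos_angle P1 P2 P3 + cos_angle P2 P3 P1 + cos_angle P3 P1 P2 = c1 /\
      Rabs (cos_angle J1 J2 J3 * cos_angle J2 J3 J1 * cos_angle J3 J1 J2) = c2 /\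
      tri_area J1 J2 J3 / tri_area P1 P2 P3 = c3.
Proof.
  set (S := a*a+b*b). set (C := a*a-b*b).
  assert (hC : 0 < C) by (unfold C; replace (a*a-b*b) with ((a-b)*(a+b)) by ring; apply Rmult_lt_0_compat; lra).
  assert (hS : 0 < S) by (unfold S; apply Rplus_lt_0_compat; apply Rmult_lt_0_compat; lra).
  set (r := sqrt (S*S + 3*(C*C))).
  assert (hr2 : r*r = S*S + 3*(C*C)) by (unfold r; apply sqrt_sqrt; nra).
  assert (hr0 : 0 <= r) by (unfold r; apply sqrt_pos).
  assert (hrS : S < r) by nra.
  set (t0 := (r - S)/(C*C)).
  assert (ht0 : 0 < t0) by (unfold t0; apply Rdiv_lt_0_compat; nra).
  assert (eq0 : C*C*(t0*t0) + 2*S*t0 - 3 = 0) by (unfold t0; replace (C * C * ((r - S) / (C * C) * ((r - S) / (C * C))) + 2 * S * ((r - S) / (C * C)) - 3)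
      with ((r*r - (S*S + 3*(C*C)))/(C*C)) by (field; lra); rewrite hr2; field; lra).
  set (h0 := 1 - t0*S).
  exists (1 + Rabs h0), (Rabs h0 / 4), (2 / Rabs h0).
  intros P1 P2 P3 J1 J2 J3 hbil hex.
  assert (hnd : nondegenerate P1 P2 P3) by (destruct hbil; auto).
  destruct (partA P1 P2 P3 J1 J2 J3 _ _ _ eq_refl eq_refl eq_refl hnd hex) as [hrho [i1 [i2 i3]]].
  destruct (partB a b hb hab P1 P2 P3 _ _ _ eq_refl eq_refl eq_refl hbil) as [t [ht [teq hsq]]].
  fold S C in teq, hsq.
  set (rho := (- vnorm (vsub P3 P2) + vnorm (vsub P3 P1) + vnorm (vsub P2 P1)) *
          (vnorm (vsub P3 P2) - vnorm (vsub P3 P1) + vnorm (vsub P2 P1)) *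
          (vnorm (vsub P3 P2) + vnorm (vsub P3 P1) - vnorm (vsub P2 P1)) /
          (2 * vnorm (vsub P3 P2) * vnorm (vsub P3 P1) * vnorm (vsub P2 P1))) in *.
  assert (tt : t = t0).
  { assert (e : (t - t0)*(C*C*(t+t0) + 2*S) = 0).
    { replace ((t - t0)*(C*C*(t+t0) + 2*S)) with ((C*C*(t*t) + 2*S*t - 3) - (C*C*(t0*t0) + 2*S*t0 - 3)) by ring.
      rewrite eq0. replace (C*C*(t*t) + 2*S*t - 3) with (-(2 * (1 - t * S) + 1 - t * C * (t * C))) by ring.
      rewrite teq. ring. }
    destruct (Rmult_integral _ _ e) as [e'|e']; [lra|]. nra. }
  rewrite tt in hsq. fold h0 in hsq.
  assert (hr : rho = Rabs h0).
  { rewrite <- (pow2_abs h0) in hsq. pose proof (Rabs_pos h0). nra. }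
  rewrite <- hr. auto.
Qed.
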